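(* Let $G$ be a directed graph with vertices $s,t$ and $k\ge1$. The function $\hat d_{\mathrm{cov}}:U^k_{\mathrm{lr}}\to\mathbb N$, $\hat d_{\mathrm{cov}}(C)=\sum_{e\in E_{\mathrm{shr}}(C)}(\mu_e(C)-1)$, is submodular on the lattice $L^*$, i.e. $\hat d_{\mathrm{cov}}(C_1\vee C_2)+\hat d_{\mathrm{cov}}(C_1\wedge C_2)\le\hat d_{\mathrm{cov}}(C_1)+\hat d_{\mathrm{cov}}(C_2)$ for all $C_1,C_2\in L^*$.
   Context: An $s$-$t$ cut of a directed graph $G$ is a set $X\subseteq E(G)$ such that removing $X$ leaves no directed $s$-$t$ path; $\Gamma_G(s,t)$ is the set of $s$-$t$ cuts of minimum cardinality. Fix a maximum-size collection $\mathcal P$ of pairwise edge-disjoint directed $s$-$t$ paths (each minimum $s$-$t$ cut contains exactly one edge of each path in $\mathcal P$). For $X,Y\in\Gamma_G(s,t)$, $S_{\min}(X\cup Y)$ (resp. $S_{\max}(X\cup Y)$) consists, for each $p\in\mathcal P$, of the edge of $(X\cup Y)\cap p$ occurring first (resp. last) along $p$. $X\le Y$ means every directed $s$-$t$ path meets an edge of $X$ at or before an edge of $Y$. $U^k_{\mathrm{lr}}$ is the set of $k$-tuples $[X_1,\dots,X_k]$ of elements of $\Gamma_G(s,t)$ with $X_i\le X_j$ for all $i<j$. $L^*$ is the lattice on $U^k_{\mathrm{lr}}$ with componentwise order, join $[X_i]_i\vee[Y_i]_i=[S_{\max}(X_i\cup Y_i)]_i$ and meet $[X_i]_i\wedge[Y_i]_i=[S_{\min}(X_i\cup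 Y_i)]_i$. For $C=[X_1,\dots,X_k]$, $\mu_e(C)$ is the number of indices $i$ with $e\in X_i$, and $E_{\mathrm{shr}}(C)=\{e\in E(G):\mu_e(C)\ge2\}$. *)

(* Defs.v *)
From mathcomp Require Import all_boot.
Set Implicit Arguments. Unset Strict Implicit. Unset Printing Implicit Defensive.

Section MinCuts.
Variables (V E : finType) (src tgt : E -> V) (s t : V).

Fixpoint dwalk (u v : V) (p : seq E) : bool :=
  match p with
  | [::] => u == v
  | e :: p' => (src e == u) && dwalk (tgt e) v p'
  end.

Definition st_path (p : seq E) : bool :=
  dwalk s t p && uniq (s :: map tgt p).

Definition st_cut (X : {set E}) : Prop :=
  forall p, st_path p -> has (fun e => e \in X) p.

Definition min_st_cut (X : {set E}) : Prop :=
  st_cut X /\ forall Y : {set E}, st_cut Y -> #|X| <= #|Y|.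

Definition edge_disjoint_paths (P : seq (seq E)) : Prop :=
  (forall p, p \in P -> st_path p) /\
  (forall i j, i < size P -> j < size P -> i != j ->
     forall e, e \in nth [::] P i -> e \notin nth [::] P j).

Definition max_edge_disjoint_paths (P : seq (seq E)) : Prop :=
  edge_disjoint_paths P /\
  forall Q, edge_disjoint_paths Q -> size Q <= size P.

Definition cut_le (X Y : {set E}) : Prop :=
  forall p, st_path p ->
    find (fun e => e \in X) p <= find (fun e => e \in Y) p.

Definition Smin (P : seq (seq E)) (Z : {set E}) : {set E} :=
  [set e | has (fun p => [&& e \in p, e \in Z &
              all (fun f => f \notin Z) (take (index e p) p)]) P].

Definition Smax (P : seq (seq E)) (Z : {set E}) : {set E} :=
  [set e | has (fun p => [&& e \in p, e \in Z &
              all (fun f => f \notin Z) (drop (index e p).+1 p)]) P].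

Definition in_Ulr (k : nat) (C : {ffun 'I_k -> {set E}}) : Prop :=
  (forall i, min_st_cut (C i)) /\
  (forall i j : 'I_k, i < j -> cut_le (C i) (C j)).

Definition Ljoin (P : seq (seq E)) k (C1 C2 : {ffun 'I_k -> {set E}})
  : {ffun 'I_k -> {set E}} := [ffun i => Smax P (C1 i :|: C2 i)].
Definition Lmeet (P : seq (seq E)) k (C1 C2 : {ffun 'I_k -> {set E}})
  : {ffun 'I_k -> {set E}} := [ffun i => Smin P (C1 i :|: C2 i)].

End MinCuts.

Definition mu (E : finType) k (C : {ffun 'I_k -> {set E}}) (e : E) : nat :=
  #|[set i : 'I_k | e \in C i]|.

Definition Eshr (E : finType) k (C : {ffun 'I_k -> {set E}}) : {set E} :=
  [set e | 2 <= mu C e].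

Definition dcov (E : finType) k (C : {ffun 'I_k -> {set E}}) : nat :=
  \sum_(e in Eshr C) (mu C e - 1).

(* Main.v *)
Require Import Defs.
From mathcomp Require Import all_boot all_order ssralg ssrnum ssrint zify.
Set Implicit Arguments. Unset Strict Implicit. Unset Printing Implicit Defensive.
Import GRing.Theory Num.Theory.

Lemma disjI (T : finType) (A B : {set T}) :
  (forall x, x \in A -> x \in B -> False) -> [disjoint A & B].
Proof.
move=> H; rewrite disjoints_subset; apply/subsetP=> x xA; rewrite inE.
by apply/negP=> xB; apply: (H x).
Qed.

Section Menger.
Variables (V E : finType) (src tgt : E -> V) (s t : V).
Local Open Scope ring_scope.

Definition w (e : E) (v : V) : int := (src e == v)%:Z - (tgt e == v)%:Z.
Definition dg (F : {set E}) (v : V) : int := \sum_(e in F) w e v.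

Lemma dwalk_deg u x p v : dwalk src tgt u x p ->
  \sum_(e <- p) w e v = (v == u)%:Z - (v == x)%:Z.
Proof.
elim: p u => [|e p IH] u /=.
  by move/eqP->; rewrite big_nil subrr.
case/andP=> /eqP <- Hw; rewrite big_cons (IH _ Hw) /w.
rewrite [src e == v]eq_sym [tgt e == v]eq_sym; lia.
Qed.

Lemma dg_seq p v : uniq p -> dg [set e in p] v = \sum_(e <- p) w e v.
Proof.
move=> Up; rewrite big_uniq //; apply: eq_bigl => e; by rewrite inE.
Qed.

Lemma dgU (A B : {set E}) v : [disjoint A & B] -> dg (A :|: B) v = dg A v + dg B v.
Proof.
move=> dAB; rewrite /dg.
rewrite (eq_bigl [predU A & B]); last by move=> e; rewrite !inE.
by rewrite bigU.
Qed.

Lemma dgD (A B : {set E}) v : B \subset A -> dg (A :\: B) v = dg A v - dg B v.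
Proof.
move=> sBA; have -> : dg A v = dg ((A :\: B) :|: B) v.
  congr dg; apply/setP=> e; rewrite !inE.
  case: (boolP (e \in B)) => eB /=; last by rewrite orbF.
  by rewrite (subsetP sBA e eB) ?orbT.
rewrite dgU ?addrK //.
by apply: disjI => e; rewrite !inE => /andP[/negP].
Qed.

Notation edp := (edge_disjoint_paths src tgt s t).

Lemma edp_cons p Q : edp (p :: Q) <->
  [/\ st_path src tgt s t p, edp Q &
      forall q, q \in Q -> forall e, e \in p -> e \notin q].
Proof.
split.
  case=> Hp Hd; split.
  - by apply: Hp; rewrite inE eqxx.
  - split; first by move=> q qQ; apply: Hp; rewrite inE qQ orbT.
    by move=> i j Hi Hj Hij; apply: (Hd i.+1 j.+1).
  - move=> q qQ e ep.
    have H1 : ((index q Q).+1 < size (p :: Q))%N by rewrite /= ltnS index_mem.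
    by have := Hd 0%N _ erefl H1 isT e ep; rewrite /= nth_index.
case=> Hp [HQ HdQ] Hc; split.
  by move=> q; rewrite inE => /orP[/eqP->|]; [|apply: HQ].
case=> [|i] [|j] //= Hi Hj Hij e.
- by move=> ep; apply: Hc => //; rewrite mem_nth.
- move=> eq; apply/negP=> ep.
  by move: (Hc _ (mem_nth [::] Hi) e ep); rewrite eq.
- by apply: HdQ.
Qed.

Lemma edp_uniq Q p q e : edp Q -> p \in Q -> q \in Q -> e \in p -> e \in q -> p = q.
Proof.
case=> _ Hd pQ qQ ep eq.
case: (eqVneq (index p Q) (index q Q)) => Hi.
  by rewrite -(nth_index [::] pQ) -(nth_index [::] qQ) Hi.
have := Hd _ _ (etrans (index_mem _ _) pQ) (etrans (index_mem _ _) qQ) Hi e.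
by rewrite !nth_index // ep eq => /(_ isT).
Qed.

Definition F0 (Q : seq (seq E)) : {set E} := [set e | has (fun p => e \in p) Q].

Lemma F0_cons p Q : F0 (p :: Q) = [set e in p] :|: F0 Q.
Proof. by apply/setP=> e; rewrite !inE. Qed.

Lemma st_path_uniq p : st_path src tgt s t p -> uniq p.
Proof. by case/andP=> _ /= /andP[_] /map_uniq. Qed.

Lemma dgF0 Q v : edp Q ->
  dg (F0 Q) v = (size Q)%:Z * ((v == s)%:Z - (v == t)%:Z).
Proof.
elim: Q => [|p Q IH].
  by move=> _; rewrite /dg big1 ?mul0r // => e; rewrite inE.
case/edp_cons=> Hp HQ Hc; rewrite F0_cons dgU.
  rewrite IH // dg_seq ?(st_path_uniq Hp) // (dwalk_deg v (proj1 (andP Hp))).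
  by rewrite /= intS mulrDl mul1r.
apply: disjI => e; rewrite !inE => ep /hasP[q qQ eq].
by move: (Hc q qQ e ep); rewrite eq.
Qed.

Lemma connect_uniq (r : rel V) u v : connect r u v ->
  exists vs, [/\ path r u vs, uniq (u :: vs) & v = last u vs].
Proof.
case/connectP=> vs0 Hp0 ->; case: (shortenP Hp0) => vs Hp Hu _.
by exists vs.
Qed.

Fixpoint gwalk (T : Type) (st en : T -> V) (u x : V) (xs : seq T) : bool :=
  match xs with
  | [::] => u == x
  | y :: xs' => (st y == u) && gwalk st en (en y) x xs'
  end.

Lemma dwalk_gwalk u x p : dwalk src tgt u x p = gwalk src tgt u x p.
Proof. by elim: p u => //= e p IH u; rewrite IH. Qed.

Lemma vpath_conv (T : Type) (st en : T -> V) (ok : pred T) (r : rel V) :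
  (forall u v, r u v -> exists y, [/\ ok y, st y = u & en y = v]) ->
  forall u vs, path r u vs ->
  exists xs, [/\ all ok xs, map en xs = vs & gwalk st en u (last u vs) xs].
Proof.
move=> Hr u vs; elim: vs u => [|v vs IH] u /=.
  by move=> _; exists [::]; rewrite /= eqxx.
case/andP=> /Hr [y [oky sty eny]] /IH [xs [H1 H2 H3]].
exists (y :: xs); rewrite /= oky H1 H2 eny sty eqxx; split=> //.
Qed.

Lemma sum_ind (R : {set V}) a : \sum_(v in R) (a == v)%:Z = (a \in R)%:Z.
Proof.
case: (boolP (a \in R)) => aR.
  rewrite (bigD1 a) //= eqxx big1 ?addr0 // => v /andP[_ /negPf].
  by rewrite eq_sym => ->.
by rewrite big1 // => v vR; case: eqP => // Ha; rewrite Ha vR in aR.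
Qed.

Lemma find_path (F : {set E}) : 0 < dg F s ->
  (forall v, v != s -> v != t -> dg F v = 0) ->
  exists p, st_path src tgt s t p /\ {subset p <= F}.
Proof.
move=> Hs Hc.
pose rF := [rel u v | [exists e in F, (src e == u) && (tgt e == v)]].
case: (boolP (connect rF s t)) => [/connect_uniq [vs [Hp Hu Ht]] | Hn].
  have [xs [H1 H2 H3]] : exists xs, [/\ all (fun e => e \in F) xs, map tgt xs = vs &
        gwalk src tgt s (last s vs) xs].
    apply: (vpath_conv (r := rF)) Hp => u v /existsP [e /and3P[eF /eqP Hu' /eqP Hv]].
    by exists e.
  exists xs; split; last by apply/allP.
  by rewrite /st_path H2 Hu dwalk_gwalk {1}Ht H3.
pose R := [set v | connect rF s v].
have sR : s \in R by rewrite inE connect0.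
have E1 : \sum_(v in R) dg F v = dg F s.
  rewrite (bigD1 s) //= big1 ?addr0 // => v /andP[vR vs]; apply: Hc => //.
  by apply: contraNneq Hn => Hvt; rewrite -Hvt; rewrite inE in vR.
have E2 : \sum_(v in R) dg F v <= 0.
  rewrite /dg exchange_big /=; apply: sumr_le0 => e eF.
  rewrite /w big_split /= sumrN !sum_ind.
  case: (boolP (src e \in R)) => Hse; last by case: (tgt e \in R).
  suff -> : tgt e \in R by rewrite subrr.
  rewrite inE in Hse; rewrite inE (connect_trans Hse) // connect1 //=.
  by apply/existsP; exists e; rewrite eF !eqxx.
by move: Hs E2; rewrite -E1; lia.
Qed.

Lemma edp_nil : edp [::].
Proof. by split=> [q|[] ]. Qed.

Lemma decomp (m : nat) : s != t -> forall F : {set E}, dg F s = m%:Z ->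
  (forall v, v != s -> v != t -> dg F v = 0) ->
  exists Q, [/\ edp Q, size Q = m & forall q, q \in Q -> {subset q <= F}].
Proof.
move=> st; elim: m => [|m IH] F Hs Hc.
  by exists [::]; split=> //; apply: edp_nil.
have [p [Hp pF]] : exists p, st_path src tgt s t p /\ {subset p <= F}.
  by apply: find_path => //; rewrite Hs.
have sub : [set e in p] \subset F by apply/subsetP=> e; rewrite inE => /pF.
have Hd v : dg (F :\: [set e in p]) v = dg F v - ((v == s)%:Z - (v == t)%:Z).
  by rewrite dgD // dg_seq ?(st_path_uniq Hp) // (dwalk_deg v (proj1 (andP Hp))).
have Hs' : dg (F :\: [set e in p]) s = m%:Z.
  by rewrite Hd Hs eqxx (negPf st) intS; lia.
have Hc' v : v != s -> v != t -> dg (F :\: [set e in p]) v = 0.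
  by move=> vs vt; rewrite Hd Hc // (negPf vs) (negPf vt) subrr.
have [Q' [H1 H2 H3]] := IH _ Hs' Hc'.
exists (p :: Q'); split.
- apply/edp_cons; split=> // q /H3 qF e ep; apply/negP=> /qF.
  by rewrite !inE ep.
- by rewrite /= H2.
- move=> q; rewrite inE => /orP[/eqP->|/H3 qF] // e /qF; rewrite inE => /andP[_].
  done.
Qed.

Lemma gwalk_st (T : Type) (st en : T -> V) u x xs :
  gwalk st en u x xs -> map st xs = belast u (map en xs).
Proof.
by elim: xs u => //= y xs IH u /andP[/eqP-> /IH ->].
Qed.

Lemma gwalk_sum (T : Type) (st en : T -> V) u x xs v :
  gwalk st en u x xs ->
  \sum_(y <- xs) ((st y == v)%:Z - (en y == v)%:Z) = (u == v)%:Z - (x == v)%:Z.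
Proof.
elim: xs u => [|y xs IH] u /=.
  by move/eqP->; rewrite big_nil subrr.
case/andP=> /eqP <- /IH; rewrite big_cons => ->; lia.
Qed.

Definition rst (y : E * bool) := if y.2 then src y.1 else tgt y.1.
Definition ren (y : E * bool) := if y.2 then tgt y.1 else src y.1.
Definition fwl (xs : seq (E * bool)) := [seq y.1 | y <- xs & y.2].
Definition bkl (xs : seq (E * bool)) := [seq y.1 | y <- xs & ~~ y.2].

Lemma sg_split xs v :
  \sum_(y <- xs) ((rst y == v)%:Z - (ren y == v)%:Z) =
  \sum_(e <- fwl xs) w e v - \sum_(e <- bkl xs) w e v.
Proof.
elim: xs => [|[e b] xs IH]; first by rewrite !big_nil subrr.
rewrite big_cons IH /fwl /bkl /rst /ren; case: b => /=; rewrite big_cons /w /=; lia.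
Qed.

Lemma fst_uniq (xs : seq (E * bool)) (b : bool) : uniq xs -> uniq [seq y.1 | y <- xs & y.2 == b].
Proof.
move=> U; rewrite map_inj_in_uniq ?filter_uniq // => [[e1 b1] [e2 b2]].
by rewrite !mem_filter /= => /andP[/eqP-> _] /andP[/eqP-> _] ->.
Qed.

Definition resid (F : {set E}) : rel V := [rel u v | [exists e,
  ((src e == u) && (tgt e == v) && (e \notin F)) ||
  ((tgt e == u) && (src e == v) && (e \in F))]].
Definition Sres (F : {set E}) := [set v | connect (resid F) s v].

Lemma t_notin_S P : s != t -> max_edge_disjoint_paths src tgt s t P ->
  t \notin Sres (F0 P).
Proof.
move=> st [HP Hmax]; apply/negP; rewrite inE => /connect_uniq [vs [Hp Hu Ht]].
pose ok (y : E * bool) := if y.2 then y.1 \notin F0 P else y.1 \in F0 P.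
have [xs [H1 H2 H3]] : exists xs, [/\ all ok xs, map ren xs = vs &
        gwalk rst ren s (last s vs) xs].
  apply: (vpath_conv (r := resid (F0 P))) Hp => u v /existsP [e /orP[]].
    by case/andP=> /andP[/eqP Hu' /eqP Hv] eF; exists (e, true).
  by case/andP=> /andP[/eqP Hu' /eqP Hv] eF; exists (e, false).
rewrite -Ht in H3.
have Uxs : uniq xs.
  apply: (@map_uniq _ _ rst); rewrite (gwalk_st H3) H2.
  by move: Hu; rewrite lastI rcons_uniq => /andP[].
have Ufw : uniq (fwl xs).
  rewrite /fwl (@eq_filter _ _ (fun y => y.2 == true)); first exact: fst_uniq.
  by case=> ? [].
have Ubk : uniq (bkl xs).
  rewrite /bkl (@eq_filter _ _ (fun y => y.2 == false)); first exact: fst_uniq.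
  by case=> ? [].
pose Fw := [set e in fwl xs]; pose Bk := [set e in bkl xs].
have sBk : Bk \subset F0 P.
  apply/subsetP=> e; rewrite inE => /mapP [[e' b] ]; rewrite mem_filter /=.
  case/andP=> Hb Hy ->; move/allP: H1 => /(_ _ Hy); rewrite /ok /=.
  by rewrite (negPf Hb).
have dFw : [disjoint F0 P :\: Bk & Fw].
  apply: disjI => e; rewrite !inE => /andP[_ eF] /mapP [[e' b]].
  rewrite mem_filter /= => /andP[Hb Hy] Hee; move/allP: H1 => /(_ _ Hy).
  by rewrite /ok /= Hb -Hee inE eF.
pose F' := (F0 P :\: Bk) :|: Fw.
have Hd v : dg F' v = ((size P).+1)%:Z * ((v == s)%:Z - (v == t)%:Z).
  rewrite dgU // dgD // dgF0 // !dg_seq //.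
  have := gwalk_sum v H3; rewrite sg_split => Hs.
  have Hs' : \sum_(e <- fwl xs) w e v =
     \sum_(e <- bkl xs) w e v + ((s == v)%:Z - (t == v)%:Z) by move: Hs; lia.
  rewrite Hs' [s == v]eq_sym [t == v]eq_sym intS mulrDl mul1r; by rewrite addrA subrK addrC.
have Hs1 : dg F' s = ((size P).+1)%:Z by rewrite Hd eqxx (negPf st) subr0 mulr1.
have Hc1 v : v != s -> v != t -> dg F' v = 0.
  by move=> vs' vt; rewrite Hd (negPf vs') (negPf vt) subrr mulr0.
have [Q [HQ1 HQ2 _]] := decomp st Hs1 Hc1.
by have := Hmax Q HQ1; rewrite HQ2 ltnn.
Qed.

Section Cut.
Variable P : seq (seq E).
Let S := Sres (F0 P).
Definition Ycut := [set e | (src e \in S) && (tgt e \notin S)].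
Lemma memY e : (e \in Ycut) = (src e \in S) && (tgt e \notin S).
Proof. by rewrite /Ycut in_set. Qed.

Lemma res_fwd e : e \notin F0 P -> src e \in S -> tgt e \in S.
Proof.
move=> eF; rewrite !inE => Hs; apply: (connect_trans Hs); apply: connect1.
by apply/existsP; exists e; rewrite !eqxx eF.
Qed.

Lemma res_bwd e : e \in F0 P -> tgt e \in S -> src e \in S.
Proof.
move=> eF; rewrite !inE => Hs; apply: (connect_trans Hs); apply: connect1.
by apply/existsP; exists e; rewrite !eqxx eF orbT.
Qed.

Lemma walk_exit u x p : u \in S -> x \notin S -> dwalk src tgt u x p ->
  has (fun e => e \in Ycut) p.
Proof.
elim: p u => [|e p IH] u /=; first by move=> uS xS /eqP Hux; rewrite -Hux uS in xS.
move=> uS xS /andP[/eqP Hsu Hw]; case: (boolP (tgt e \in S)) => Ht.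
  by rewrite (IH _ Ht xS Hw) orbT.
by rewrite memY Hsu uS Ht.
Qed.

Lemma Ycut_F0 : Ycut \subset F0 P.
Proof.
apply/subsetP=> e; rewrite memY => /andP[Hs Ht]; apply/negPn/negP => eF.
by rewrite (res_fwd eF Hs) in Ht.
Qed.

Lemma cntY u x q : {subset q <= F0 P} -> dwalk src tgt u x q ->
  (u \notin S -> count (fun e => e \in Ycut) q = 0%N) /\
  (count (fun e => e \in Ycut) q <= 1)%N.
Proof.
elim: q u => [|e q IH] u //= sub /andP[/eqP Hsu Hw].
have sub' : {subset q <= F0 P} by move=> f fq; apply: sub; rewrite inE fq orbT.
have eF : e \in F0 P by apply: sub; rewrite inE eqxx.
have [IH1 IH2] := IH _ sub' Hw.
split.
  move=> uS; have eY : e \notin Ycut by rewrite memY Hsu (negPf uS).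
  rewrite (negPf eY) add0n; apply: IH1; apply/negP=> /(res_bwd eF).
  by rewrite Hsu (negPf uS).
case: (boolP (e \in Ycut)) => eY /=; last by rewrite add0n.
by move: eY; rewrite memY => /andP[_ /IH1 ->].
Qed.

Lemma cardY_F0 Q : (#|Ycut :&: F0 Q| <= \sum_(p <- Q) count (fun e => e \in Ycut) p)%N.
Proof.
elim: Q => [|p Q IH].
  rewrite big_nil leqn0 cards_eq0; apply/eqP/setP=> e; rewrite !inE.
  by rewrite andbF.
rewrite big_cons F0_cons setIUr; apply: (leq_trans (leq_card_setU _ _)).
apply: leq_add => //; rewrite -size_filter.
apply: leq_trans (card_size _); apply: subset_leq_card; apply/subsetP => e.
by rewrite in_setI mem_filter => /andP[-> ]; rewrite inE.
Qed.

Lemma cardY : edp P -> (#|Ycut| <= size P)%N.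
Proof.
move=> HP; rewrite -(setIidPl Ycut_F0); apply: (leq_trans (cardY_F0 P)).
rewrite -sum1_size big_seq [X in (_ <= X)%N]big_seq.
apply: leq_sum => p pP.
have Hp := proj1 HP p pP.
have sub : {subset p <= F0 P} by move=> e ep; rewrite inE; apply/hasP; exists p.
exact: (proj2 (cntY sub (proj1 (andP Hp)))).
Qed.

Lemma Ycut_cut : t \notin S -> st_cut src tgt s t Ycut.
Proof.
move=> tS p /andP[Hw _]; apply: (walk_exit _ tS Hw).
by rewrite inE connect0.
Qed.
End Cut.

Lemma min_cut_le P X : s != t -> max_edge_disjoint_paths src tgt s t P ->
  min_st_cut src tgt s t X -> (#|X| <= size P)%N.
Proof.
move=> st HP [_ Hmin].
apply: leq_trans (Hmin _ (Ycut_cut (t_notin_S st HP))) (cardY (proj1 HP)).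
Qed.

Lemma cardF0 Q (X : {set E}) : edp Q ->
  #|X :&: F0 Q| = \sum_(p <- Q) #|X :&: [set e in p]|.
Proof.
elim: Q => [|p Q IH].
  move=> _; rewrite big_nil; apply/eqP; rewrite cards_eq0; apply/eqP/setP=> e.
  by rewrite !inE andbF.
case/edp_cons=> _ HQ Hc; rewrite big_cons -IH // F0_cons setIUr cardsU.
suff -> : X :&: [set e in p] :&: (X :&: F0 Q) = set0 by rewrite cards0 subn0.
apply/setP=> e; rewrite !inE; apply/negP=> /andP[/andP[_ ep] /andP[_ /hasP[q qQ eq]]].
by move: (Hc q qQ e ep); rewrite eq.
Qed.

Lemma sum_gt (Q : seq (seq E)) (c : seq E -> nat) p :
  (forall q, q \in Q -> 1 <= c q)%N -> p \in Q -> (2 <= c p)%N ->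
  (size Q < \sum_(q <- Q) c q)%N.
Proof.
elim: Q => [|q Q IH] // H1; rewrite inE big_cons /= => /orP[/eqP<-|pQ] H2.
  apply: (@leq_trans (2 + size Q)) => //; apply: leq_add => //.
  rewrite -sum1_size big_seq [X in (_ <= X)%N]big_seq.
  by apply: leq_sum => r rQ; apply: H1; rewrite inE rQ orbT.
apply: (@leq_trans (1 + (size Q).+1)) => //; apply: leq_add; first by apply: H1; rewrite inE eqxx.
by apply: IH => // r rQ; apply: H1; rewrite inE rQ orbT.
Qed.

Lemma key P X p e f : s != t -> max_edge_disjoint_paths src tgt s t P ->
  min_st_cut src tgt s t X -> p \in P -> e \in p -> f \in p -> e \in X -> f \in X ->
  e = f.
Proof.
move=> st HP HX pP ep fp eX fX; apply/eqP/negPn/negP=> nef.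
have Hle := min_cut_le st HP HX.
have H1 : (size P < \sum_(q <- P) #|X :&: [set e in q]|)%N.
  apply: sum_gt pP _.
    move=> q qP; rewrite card_gt0; have := proj1 HX q (proj1 (proj1 HP) q qP).
    case/hasP=> g gq gX; apply/set0Pn; exists g; by rewrite !inE gX.
  apply: (@leq_trans #|[set e; f]|); first by rewrite cards2 nef.
  apply: subset_leq_card; apply/subsetP=> g.
  by rewrite !inE => /orP[]/eqP->; rewrite ?eX ?ep ?fX ?fp.
rewrite -cardF0 in H1; last exact: (proj1 HP).
have := leq_trans (subset_leq_card (subsetIl X (F0 P))) Hle.
by rewrite leqNgt H1.
Qed.
End Menger.

Lemma absl k (a b : 'I_k -> nat) x :
  (forall i j : 'I_k, i <= j -> a i <= a j) ->
  (forall i j : 'I_k, i <= j -> b i <= b j) ->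
  (#|[set i | maxn (a i) (b i) == x]|).-1 + (#|[set i | minn (a i) (b i) == x]|).-1
  <= (#|[set i | a i == x]|).-1 + (#|[set i | b i == x]|).-1.
Proof.
move=> Ha Hb.
set MX := [set i | maxn (a i) (b i) == x]; set MN := [set i | minn (a i) (b i) == x].
set MA := [set i | a i == x]; set MB := [set i | b i == x].
have E1 : MX :|: MN = MA :|: MB.
  apply/setP=> i; rewrite !inE; case: (leqP (a i) (b i)) => H.
    by rewrite orbC.
  by [].
have E2 : MX :&: MN = MA :&: MB.
  apply/setP=> i; rewrite !inE; case: (leqP (a i) (b i)) => H.
    by rewrite andbC.
  by [].
have Hs : #|MX| + #|MN| = #|MA| + #|MB| by rewrite -cardsUI E1 E2 cardsUI.
case: (posnP #|MA|) => HA; first by move: Hs; rewrite HA; lia.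
case: (posnP #|MB|) => HB; first by move: Hs; rewrite HB; lia.
have [i iA] : exists i, i \in MA by apply/set0Pn; rewrite -card_gt0.
have [j jB] : exists j, j \in MB by apply/set0Pn; rewrite -card_gt0.
move: iA jB; rewrite !inE => /eqP ai /eqP bj.
suff [HX HN] : 0 < #|MX| /\ 0 < #|MN| by move: Hs; lia.
case: (leqP i j) => Hij.
  have := Ha _ _ Hij; have := Hb _ _ Hij => h1 h2.
  split; rewrite card_gt0; apply/set0Pn.
    by exists i; rewrite inE; apply/eqP; lia.
  by exists j; rewrite inE; apply/eqP; lia.
have Hji := ltnW Hij.
have := Ha _ _ Hji; have := Hb _ _ Hji => h1 h2.
split; rewrite card_gt0; apply/set0Pn.
  by exists j; rewrite inE; apply/eqP; lia.
by exists i; rewrite inE; apply/eqP; lia.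
Qed.

Lemma dcovE (E : finType) k (C : {ffun 'I_k -> {set E}}) :
  dcov C = \sum_e (mu C e).-1.
Proof.
rewrite /dcov /Eshr big_mkcond /=; apply: eq_bigr => e _; rewrite inE.
by case: ifP => H; [rewrite subn1 | move: H; case: (mu C e) => [|[]]].
Qed.

Lemma in_drop_u (E : eqType) (p : seq E) n g : uniq p ->
  (g \in drop n p) = (g \in p) && (n <= index g p).
Proof.
move=> Up; case: (boolP (g \in p)) => gp /=; last first.
  by apply/negP=> /mem_drop; rewrite (negPf gp).
move: Up gp; rewrite -{1 2}(cat_take_drop n p) cat_uniq mem_cat => /and3P[_ Hd _].
case/orP=> H.
  have Hi : index g p < n by apply: index_ltn.
  rewrite leqNgt Hi /=; apply/negP=> Hg; move/hasP: Hd; apply; exists g => //.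
rewrite H; apply/esym; rewrite leqNgt; apply/negP=> Hl.
move/hasP: Hd; apply; exists g => //.
by rewrite in_take ?Hl // (mem_drop H).
Qed.

Section Idx.
Variables (E : eqType) (p : seq E) (Z : pred E) (a b : nat) (e0 : E).
Hypotheses (Up : uniq p) (Ha : a < size p) (Hb : b < size p)
  (HZ : forall g, g \in p -> Z g = (index g p == a) || (index g p == b)).

Lemma all_drop n : all (fun g => ~~ Z g) (drop n p) = (a < n) && (b < n).
Proof.
apply/allP/andP.
  move=> H; split; rewrite ltnNge; apply/negP=> Hn.
    have gp : nth e0 p a \in p by rewrite mem_nth.
    have := H (nth e0 p a); rewrite in_drop_u // gp index_uniq // Hn.
    by rewrite HZ // index_uniq // eqxx => /(_ isT).
  have gp : nth e0 p b \in p by rewrite mem_nth.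
  have := H (nth e0 p b); rewrite in_drop_u // gp index_uniq // Hn.
  by rewrite HZ // index_uniq // eqxx orbT => /(_ isT).
case=> H1 H2 g; rewrite in_drop_u // => /andP[gp Hn]; rewrite HZ //.
by apply/negP=> /orP[]/eqP Hi; lia.
Qed.

Lemma all_take n : all (fun g => ~~ Z g) (take n p) = (n <= a) && (n <= b).
Proof.
apply/allP/andP.
  move=> H; split; rewrite leqNgt; apply/negP=> Hn.
    have gp : nth e0 p a \in p by rewrite mem_nth.
    have := H (nth e0 p a); rewrite in_take // index_uniq // Hn.
    by rewrite HZ // index_uniq // eqxx => /(_ isT).
  have gp : nth e0 p b \in p by rewrite mem_nth.
  have := H (nth e0 p b); rewrite in_take // index_uniq // Hn.
  by rewrite HZ // index_uniq // eqxx orbT => /(_ isT).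
case=> H1 H2 g Hg; have gp := mem_take Hg; have := index_ltn Hg.
rewrite HZ //; move=> Hi; apply/negP=> /orP[]/eqP Hi'; lia.
Qed.
End Idx.

Lemma find_char (E : eqType) (X : pred E) (p : seq E) f : uniq p -> has X p ->
  (forall e g, e \in p -> g \in p -> X e -> X g -> e = g) -> f \in p ->
  X f = (index f p == find X p).
Proof.
move=> Up hX Hu fp; have Hj := has_find X p; rewrite hX in Hj.
have Xn := nth_find f hX.
apply/idP/eqP.
  move=> Xf; rewrite (Hu f (nth f p (find X p))) ?mem_nth //.
  by rewrite index_uniq.
by move=> Hi; rewrite -(nth_index f fp) Hi.
Qed.

Lemma Smax_char (V E : finType) (src tgt : E -> V) s t P (Z : {set E}) p e :
  edge_disjoint_paths src tgt s t P -> p \in P -> e \in p ->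
  (e \in Smax P Z) = (e \in Z) && all (fun f => f \notin Z) (drop (index e p).+1 p).
Proof.
move=> HP pP ep; rewrite inE; apply/hasP/andP => [[q qP /and3P[eq eZ Hall]] | [eZ Hall]].
  by have Hpq := edp_uniq HP pP qP ep eq; subst q; rewrite eZ Hall.
by exists p => //; rewrite ep eZ Hall.
Qed.

Lemma Smin_char (V E : finType) (src tgt : E -> V) s t P (Z : {set E}) p e :
  edge_disjoint_paths src tgt s t P -> p \in P -> e \in p ->
  (e \in Smin P Z) = (e \in Z) && all (fun f => f \notin Z) (take (index e p) p).
Proof.
move=> HP pP ep; rewrite inE; apply/hasP/andP => [[q qP /and3P[eq eZ Hall]] | [eZ Hall]].
  by have Hpq := edp_uniq HP pP qP ep eq; subst q; rewrite eZ Hall.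
by exists p => //; rewrite ep eZ Hall.
Qed.

Lemma mono_find (V E : finType) (src tgt : E -> V) s t k (C : {ffun 'I_k -> {set E}}) p :
  in_Ulr src tgt s t C -> st_path src tgt s t p ->
  forall i j : 'I_k, (i <= j)%N ->
  (find (fun g => g \in C i) p <= find (fun g => g \in C j) p)%N.
Proof.
move=> [_ Hc] Hp i j; rewrite leq_eqVlt => /orP[/eqP Hij | Hij].
  by have -> : i = j by apply: val_inj.
exact: Hc i j Hij p Hp.
Qed.

Theorem theorem7 (V E : finType) (src tgt : E -> V) (s t : V) (k : nat)
  (P : seq (seq E)) :
  0 < k ->
  max_edge_disjoint_paths src tgt s t P ->
  forall C1 C2 : {ffun 'I_k -> {set E}},
    in_Ulr src tgt s t C1 -> in_Ulr src tgt s t C2 ->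
    dcov (Ljoin P C1 C2) + dcov (Lmeet P C1 C2) <= dcov C1 + dcov C2.
Proof.
move=> k0 HP C1 C2 HU1 HU2; have [H1a H1b] := HU1; have [H2a H2b] := HU2.
have st : s != t.
  apply/negP=> /eqP Est; case: (H1a (Ordinal k0)) => Hc _.
  by have := Hc [::]; rewrite /st_path /= Est eqxx => /(_ isT).
have HPe := proj1 HP.
rewrite !dcovE -!big_split /=; apply: leq_sum => e _.
case: (boolP (has (fun p => e \in p) P)) => [/hasP [p pP ep] | Hn]; last first.
  suff [-> ->] : mu (Ljoin P C1 C2) e = 0 /\ mu (Lmeet P C1 C2) e = 0 by [].
  split; apply/eqP; rewrite cards_eq0; apply/eqP/setP=> i; rewrite !inE ffunE inE;
  apply/negP=> /hasP [q qP /andP[eq _]]; move/hasP: Hn; apply; by exists q.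
have Hp := proj1 HPe p pP; have Up := st_path_uniq Hp.
pose al i := find (fun g => g \in C1 i) p; pose be i := find (fun g => g \in C2 i) p.
pose x := index e p.
have key1 i g : g \in p -> (g \in C1 i) = (index g p == al i).
  move=> gp; apply: (find_char (X := fun g => g \in C1 i)) => //.
    exact: (proj1 (H1a i) p Hp).
  by move=> a b ap bp; apply: (key st HP (H1a i) pP).
have key2 i g : g \in p -> (g \in C2 i) = (index g p == be i).
  move=> gp; apply: (find_char (X := fun g => g \in C2 i)) => //.
    exact: (proj1 (H2a i) p Hp).
  by move=> a b ap bp; apply: (key st HP (H2a i) pP).
have hA i : al i < size p by rewrite -has_find; exact: (proj1 (H1a i) p Hp).
have hB i : be i < size p by rewrite -has_find; exact: (proj1 (H2a i) p Hp).
have HZ i g : g \in p -> (g \in C1 i :|: C2 i) = (index g p == al i) || (index g p == be i).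
  by move=> gp; rewrite inE key1 // key2.
have HJ i : (e \in Ljoin P C1 C2 i) = (maxn (al i) (be i) == x).
  rewrite ffunE (Smax_char _ HPe pP ep) HZ //.
  rewrite (all_drop e Up (hA i) (hB i) (HZ i)) -/x; lia.
have HM i : (e \in Lmeet P C1 C2 i) = (minn (al i) (be i) == x).
  rewrite ffunE (Smin_char _ HPe pP ep) HZ //.
  rewrite (all_take e Up (hA i) (hB i) (HZ i)) -/x; lia.
have -> : mu (Ljoin P C1 C2) e = #|[set i | maxn (al i) (be i) == x]|.
  by apply: eq_card => i; rewrite !in_set HJ.
have -> : mu (Lmeet P C1 C2) e = #|[set i | minn (al i) (be i) == x]|.
  by apply: eq_card => i; rewrite !in_set HM.
have -> : mu C1 e = #|[set i | al i == x]|.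
  by apply: eq_card => i; rewrite !in_set key1.
have -> : mu C2 e = #|[set i | be i == x]|.
  by apply: eq_card => i; rewrite !in_set key2.
apply: absl; [exact: mono_find HU1 Hp | exact: mono_find HU2 Hp].
Qed.
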